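(* For all integers $n\ge0$, $$f(n,s,q)=\sum_{j=0}^n(-1)^j\begin{bmatrix} n\\ j\end{bmatrix}_q\frac{\prod_{i=0}^{j-1}(q^{2i+1}-s)}{(-q;q)_j},$$ $$F(2n,s,q)=\sum_{k=0}^n\begin{bmatrix} n\\ k\end{bmatrix}_{q^2}\frac{\prod_{j=0}^{2k-1}(q^j-s)}{(q;q^2)_k},\qquad F(2n+1,s,q)=\sum_{k=0}^n\begin{bmatrix} n\\ k\end{bmatrix}_{q^2}\frac{\prod_{j=0}^{2k}(q^j-s)}{(q;q^2)_{k+1}}.$$
   Context: $q$ is an indeterminate. $(x;q)_n=\prod_{j=0}^{n-1}(1-q^jx)$. The Gaussian binomial coefficient is $\begin{bmatrix} n\\ j\end{bmatrix}_q=\frac{(q;q)_n}{(q;q)_j(q;q)_{n-j}}$ for $0\le j\le n$ and $0$ otherwise. The normalized Rogers–Szegö polynomials are $f(n,s,q)=\dfrac{\sum_{j=0}^n s^j\begin{bmatrix} n\\ j\end{bmatrix}_{q^2}}{(-q;q)_n}$ and $F(n,s,q)=\dfrac{\sum_{j=0}^n(-s)^j\begin{bmatrix} n\\ j\end{bmatrix}_{q}}{(q;q^2)_{\lfloor (n+1)/2\rfloor}}$. *)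

(* Defs.v *)
From HB Require Import structures.
From mathcomp Require Import all_boot all_order all_algebra fraction.
Set Implicit Arguments. Unset Strict Implicit. Unset Printing Implicit Defensive.
Import Order.TTheory GRing.Theory Num.Theory.
Local Open Scope ring_scope.

Definition qpoch (K : fieldType) (x q : K) (n : nat) : K :=
  \prod_(j < n) (1 - q ^+ j * x).

Definition gbin (K : fieldType) (q : K) (n j : nat) : K :=
  if (j <= n)%N then qpoch q q n / (qpoch q q j * qpoch q q (n - j)) else 0.

Definition fRS (K : fieldType) (n : nat) (s q : K) : K :=
  (\sum_(j < n.+1) s ^+ j * gbin (q ^+ 2) n j) / qpoch (- q) q n.

Definition FRS (K : fieldType) (n : nat) (s q : K) : K :=
  (\sum_(j < n.+1) (- s) ^+ j * gbin q n j) / qpoch q (q ^+ 2) (n.+1)./2.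

(* The field Q(q, s) of rational functions in two indeterminates:
   fraction field of {poly {poly rat}}; s is the outer variable, q the inner. *)
Definition RQS := {fraction {poly {poly rat}}}.
Definition qv : RQS := FracField.tofrac ((('X : {poly rat}) %:P) : {poly {poly rat}}).
Definition sv : RQS := FracField.tofrac ('X : {poly {poly rat}}).

(* Main.v *)
Require Import Defs.
Set Warnings "-notation-overridden -ambiguous-paths -parsing".
From HB Require Import structures.
From mathcomp Require Import all_boot all_order all_algebra fraction.
From mathcomp Require Import ring zify.
Import GRing.Theory.
Local Open Scope ring_scope.

Lemma bump0 i : bump 0 i = i.+1. Proof. by []. Qed.

Section Expand.
Variable K : fieldType.

Lemma sum_extend (F : nat -> K) n m : (forall j, (n <= j)%N -> F j = 0) ->
  (n <= m)%N -> \sum_(j < m) F j = \sum_(j < n) F j.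
Proof.
move=> F0 lenm; rewrite (big_ord_widen _ F lenm) [in RHS]big_mkcond /=.
apply: eq_bigr => i _; case: ifP => // /negbT; rewrite -leqNgt => /F0 ->. by [].
Qed.

Lemma expand_step (B : nat -> K -> K) t lam (u v w : nat -> K) (a a' : nat -> K) N s :
  (forall m s, B m (t * s) + lam * s * B m s =
      (if m is m'.+1 then u m * B m' s else 0) + v m * B m s + w m * B m.+1 s) ->
  (forall m, (N < m)%N -> a m = 0) ->
  (forall k, (k <= N.+1)%N -> a' k = a k.+1 * u k.+1 + a k * v k
                + (if k is k'.+1 then a k' * w k' else 0)) ->
  \sum_(k < N.+2) a' k * B k s
   = \sum_(m < N.+1) a m * B m (t * s) + lam * s * \sum_(m < N.+1) a m * B m s.
Proof.
move=> TB a0 rec.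
transitivity (\sum_(m < N.+1) a m * ((if (m : nat) is m'.+1 then u m * B m' s else 0)
     + v m * B m s + w m * B m.+1 s)); last first.
  rewrite mulr_sumr -big_split /=; apply: eq_bigr => m _; rewrite -TB; ring.
have S1 : \sum_(m < N.+1) a m * (if (m : nat) is m'.+1 then u m * B m' s else 0)
   = \sum_(k < N.+2) a k.+1 * u k.+1 * B k s.
  rewrite big_ord_recl /= mulr0 add0r.
  rewrite (@sum_extend (fun k => a k.+1 * u k.+1 * B k s) N N.+2).
  - by apply: eq_bigr => i _; rewrite bump0 add0n mulrA.
  - by move=> j Hj; rewrite a0 ?mul0r.
  - lia.
have S2 : \sum_(m < N.+1) a m * (v m * B m s) = \sum_(k < N.+2) a k * v k * B k s.
  rewrite (@sum_extend (fun k => a k * v k * B k s) N.+1 N.+2).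
  - by apply: eq_bigr => i _; rewrite mulrA.
  - by move=> j Hj; rewrite a0 ?mul0r.
  - lia.
have S3 : \sum_(m < N.+1) a m * (w m * B m.+1 s)
   = \sum_(k < N.+2) (if (k : nat) is k'.+1 then a k' * w k' else 0) * B k s.
  rewrite [RHS]big_ord_recl /= mul0r add0r.
  by apply: eq_bigr => i _; rewrite bump0 add0n mulrA.
rewrite (eq_bigr (fun m : 'I_N.+1 => a m * (if (m : nat) is m'.+1 then u m * B m' s else 0)
   + a m * (v m * B m s) + a m * (w m * B m.+1 s))); last first.
  by move=> i _; rewrite !mulrDr.
rewrite !big_split /= S1 S2 S3 -!big_split /=.
apply: eq_bigr => i _; rewrite rec ?mulrDl //; have := ltn_ord i; lia.
Qed.

Lemma expand_eq (B C : nat -> K -> K) t lam (u v w u' v' w' : nat -> K)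
  (a b : nat -> nat -> K) :
  (forall m s, B m (t * s) + lam * s * B m s =
      (if m is m'.+1 then u m * B m' s else 0) + v m * B m s + w m * B m.+1 s) ->
  (forall m s, C m (t * s) + lam * s * C m s =
      (if m is m'.+1 then u' m * C m' s else 0) + v' m * C m s + w' m * C m.+1 s) ->
  (forall N m, (N < m)%N -> a N m = 0) ->
  (forall N m, (N < m)%N -> b N m = 0) ->
  (forall N k, (k <= N.+1)%N -> a N.+1 k = a N k.+1 * u k.+1 + a N k * v k
                + (if k is k'.+1 then a N k' * w k' else 0)) ->
  (forall N k, (k <= N.+1)%N -> b N.+1 k = b N k.+1 * u' k.+1 + b N k * v' k
                + (if k is k'.+1 then b N k' * w' k' else 0)) ->
  (forall s, a 0%N 0%N * B 0%N s = b 0%N 0%N * C 0%N s) ->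
  forall N s, \sum_(m < N.+1) a N m * B m s = \sum_(m < N.+1) b N m * C m s.
Proof.
move=> TB TC a0 b0 ra rb base; elim=> [|N IH] s; first by rewrite !big_ord1.
by rewrite (@expand_step B t lam u v w (a N) (a N.+1) N s TB (a0 N) (ra N)) (@expand_step C t lam u' v' w' (b N) (b N.+1) N s TC (b0 N) (rb N)) !IH.
Qed.

Lemma sum_even_odd (F : nat -> K) n :
  \sum_(m < (2 * n).+1) F m = \sum_(k < n.+1) F (2 * k)%N + \sum_(k < n) F (2 * k).+1.
Proof.
elim: n => [|n IH]; first by rewrite big_ord0 addr0 !big_ord1.
have -> : (2 * n.+1).+1 = ((2 * n).+1).+2 by lia.
rewrite big_ord_recr /= big_ord_recr /= IH [X in _ = X + _]big_ord_recr [X in _ = _ + X]big_ord_recr /=.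
have -> : (2 * n.+1 = (2 * n).+2)%N by lia.
by rewrite -!addrA; congr (_ + _); rewrite addrA addrC.
Qed.

Lemma sum_even_odd2 (F : nat -> K) n :
  \sum_(m < (2 * n).+2) F m = \sum_(k < n.+1) F (2 * k)%N + \sum_(k < n.+1) F (2 * k).+1.
Proof. by rewrite big_ord_recr /= sum_even_odd [X in _ = _ + X]big_ord_recr /= addrA. Qed.
End Expand.

Section Gbin.
Variable K : fieldType.

Lemma qpochS (a x : K) n : qpoch a x n.+1 = qpoch a x n * (1 - x ^+ n * a).
Proof. by rewrite /qpoch big_ord_recr. Qed.

Lemma qpoch0 (a x : K) : qpoch a x 0 = 1.
Proof. by rewrite /qpoch big_ord0. Qed.

Variable x : K.
Hypothesis hx : forall i, (0 < i)%N -> 1 - x ^+ i != 0.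

Lemma facS n : qpoch x x n.+1 = qpoch x x n * (1 - x ^+ n.+1).
Proof. by rewrite qpochS exprSr. Qed.

Lemma fac_neq0 n : qpoch x x n != 0.
Proof.
elim: n => [|n IH]; first by rewrite qpoch0 oner_neq0.
by rewrite facS mulf_neq0 // hx.
Qed.

Lemma gbin_gt n k : (n < k)%N -> gbin x n k = 0.
Proof. by rewrite /gbin ltnNge => /negbTE ->. Qed.

Lemma gbin_n0 n : gbin x n 0 = 1.
Proof. by rewrite /gbin leq0n subn0 qpoch0 mul1r divff // fac_neq0. Qed.

Lemma gbin_nn n : gbin x n n = 1.
Proof. by rewrite /gbin leqnn subnn qpoch0 mulr1 divff // fac_neq0. Qed.

Lemma gbin_pascal n k :
  gbin x n.+1 k.+1 = gbin x n k + x ^+ k.+1 * gbin x n k.+1.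
Proof.
have [ltkn|] := ltnP k n.
  have [m ->] : exists m, n = (k.+1 + m)%N by exists (n - k.+1)%N; lia.
  rewrite /gbin.
  have -> : ((k.+1 + m).+1 - k.+1 = m.+1)%N by lia.
  have -> : (k.+1 + m - k = m.+1)%N by lia.
  have -> : (k.+1 + m - k.+1 = m)%N by lia.
  rewrite !ifT; try lia.
  rewrite !facS.
  have -> : (k.+1 + m).+1 = (k.+1 + m.+1)%N by lia.
  rewrite exprD.
  have h1 := fac_neq0 k; have h2 := fac_neq0 m; have h3 := fac_neq0 (k.+1 + m).
  have h4 := @hx k.+1 (ltn0Sn k); have h5 := @hx m.+1 (ltn0Sn m).
  field; by rewrite ?h1 ?h2 ?h3 ?h4 ?h5.
rewrite leq_eqVlt => /orP [/eqP ->|ltnk].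
  by rewrite !gbin_nn (@gbin_gt k k.+1) // mulr0 addr0.
by rewrite !gbin_gt ?mulr0 ?addr0 //; lia.
Qed.

Lemma gbin_ratio n k :
  gbin x n k.+1 * (1 - x ^+ k.+1) = gbin x n k * (1 - x ^+ (n - k)).
Proof.
have [ltkn|] := ltnP k n.
  have [m ->] : exists m, n = (k.+1 + m)%N by exists (n - k.+1)%N; lia.
  rewrite /gbin.
  have -> : (k.+1 + m - k = m.+1)%N by lia.
  have -> : (k.+1 + m - k.+1 = m)%N by lia.
  rewrite !ifT; try lia.
  rewrite !facS.
  have h1 := fac_neq0 k; have h2 := fac_neq0 m; have h3 := fac_neq0 (k.+1 + m).
  have h4 := @hx k.+1 (ltn0Sn k); have h5 := @hx m.+1 (ltn0Sn m).
  field; by rewrite ?h1 ?h2 ?h3 ?h4 ?h5.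
rewrite leq_eqVlt => /orP [/eqP ->|ltnk].
  by rewrite subnn expr0 subrr mulr0 gbin_gt ?mul0r.
by rewrite !gbin_gt ?mul0r //; lia.
Qed.
End Gbin.

Section Main.
Variable K : fieldType.
Variable q : K.
Hypothesis hq : forall i, (0 < i)%N -> 1 - q ^+ i != 0.

Lemma hq2 : forall i, (0 < i)%N -> 1 - (q ^+ 2) ^+ i != 0.
Proof. by move=> i Hi; rewrite -exprM hq //; lia. Qed.
Local Hint Resolve hq2 : core.

Definition Q m (s : K) := \prod_(j < m) (q ^+ j - s).
Definition P j (s : K) := \prod_(i < j) (q ^+ (2 * i).+1 - s).
Definition e r := qpoch q (q ^+ 2) r.
Definition c r := if odd r then 0 else e r./2.
Definition d r := qpoch (- q) q r.

Lemma Q_S m s : Q m.+1 s = Q m s * (q ^+ m - s).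
Proof. by rewrite /Q big_ord_recr. Qed.

Lemma Q_qs m s : Q m.+1 (q * s) = (1 - q * s) * (q ^+ m * Q m s).
Proof.
rewrite /Q big_ord_recl /= expr0; congr (_ * _).
rewrite (eq_bigr (fun i : 'I_m => q * (q ^+ i - s))); last first.
  by move=> i _; rewrite bump0 exprS mulrBr.
by rewrite big_split /= prodr_const card_ord.
Qed.

Lemma P_S j s : P j.+1 s = P j s * (q ^+ (2 * j).+1 - s).
Proof. by rewrite /P big_ord_recr. Qed.

Lemma P_ps j s : P j.+1 (q ^+ 2 * s) = (q - q ^+ 2 * s) * (q ^+ (2 * j) * P j s).
Proof.
rewrite /P big_ord_recl /= muln0 expr1; congr (_ * _).
rewrite (eq_bigr (fun i : 'I_j => q ^+ 2 * (q ^+ (2 * i).+1 - s))); last first.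
  by move=> i _; rewrite bump0 mulnS -addnS exprD mulrBr.
by rewrite big_split /= prodr_const card_ord exprM.
Qed.

Lemma c_rec r : c r.+1 = c r.-1 * (1 - q ^+ r).
Proof.
case: r => [|r]; first by rewrite /c /= expr0 subrr mulr0.
rewrite /c /= negbK; case: ifP => Ho; first by rewrite mul0r.
rewrite /e qpochS; congr (_ * (1 - _)).
have Er : r = (2 * r./2)%N by lia.
by rewrite {2}Er -exprM -exprSr.
Qed.

Lemma d_rec r : d r.+1 = d r * (1 + q) - q * (1 - (q ^+ 2) ^+ r) * d r.-1.
Proof.
case: r => [|r]; first by rewrite /d /= !qpochS qpoch0 expr0 subrr; ring.
rewrite /d /= !qpochS -exprM mulnC exprM !exprS; ring.
Qed.

Lemma monoH m s : (q * s) ^+ m + (-1) * s * s ^+ m =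
  (if m is m'.+1 then (fun _ => 0 : K) m * s ^+ m' else 0) + q ^+ m * s ^+ m + (-1) * s ^+ m.+1.
Proof. by case: m => [|m]; rewrite exprMn !exprS; ring. Qed.

Definition uQ m := if m is m'.+1 then q ^+ m' * (1 - q ^+ m'.+1) else 0.

Lemma lawQ m s : Q m (q * s) + (-1) * s * Q m s =
  (if m is m'.+1 then uQ m * Q m' s else 0) + (fun _ => 0 : K) m * Q m s + (fun _ => 1 : K) m * Q m.+1 s.
Proof.
case: m => [|m]; first by rewrite Q_S /Q !big_ord0 expr0; ring.
by rewrite Q_qs !Q_S /uQ !exprS; ring.
Qed.

Lemma monoA m s : (q ^+ 2 * s) ^+ m + 1 * s * s ^+ m =
  (if m is m'.+1 then (fun _ => 0 : K) m * s ^+ m' else 0) + (q ^+ 2) ^+ m * s ^+ m + 1 * s ^+ m.+1.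
Proof. by case: m => [|m]; rewrite exprMn !exprS; ring. Qed.

Definition uP j := if j is j'.+1 then q ^+ (2 * j').+1 * (1 - q ^+ (2 * j').+2) else 0.
Definition vP j := q ^+ (2 * j) * (1 + q).

Lemma lawP j s : P j (q ^+ 2 * s) + 1 * s * P j s =
  (if j is j'.+1 then uP j * P j' s else 0) + vP j * P j s + (fun _ => -1 : K) j * P j.+1 s.
Proof.
case: j => [|j]; first by rewrite P_S /P /vP !big_ord0 muln0 !expr0 expr1; ring.
rewrite P_ps !P_S /uP /vP.
have -> : (2 * j.+1 = (2 * j).+2)%N by lia.
rewrite !exprS; ring.
Qed.


Definition aH N m := (-1) ^+ m * gbin q N m.
Lemma recH N k : (k <= N.+1)%N -> aH N.+1 k = aH N k.+1 * (fun _ => 0 : K) k.+1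
   + aH N k * q ^+ k + (if k is k'.+1 then aH N k' * (fun _ => -1 : K) k' else 0).
Proof.
move=> _; case: k => [|k]; rewrite /aH /=.
  by rewrite !(@gbin_n0 _ _ hq) expr0; ring.
by rewrite (@gbin_pascal _ _ hq) !exprS; ring.
Qed.

Definition aR N m := gbin q N m * c (N - m).
Lemma recR N k : (k <= N.+1)%N -> aR N.+1 k = aR N k.+1 * uQ k.+1
   + aR N k * (fun _ => 0 : K) k + (if k is k'.+1 then aR N k' * (fun _ => 1 : K) k' else 0).
Proof.
move=> _; case: k => [|k]; rewrite /aR /=.
  have R := @gbin_ratio _ q hq N 0; rewrite (@gbin_n0 _ _ hq) subn0 mul1r in R.
  have E : gbin q N 1 = (1 - q ^+ N) / (1 - q ^+ 1) by rewrite -R mulfK // hq.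
  rewrite subn0 (@gbin_n0 _ _ hq) E c_rec subn1 expr0.
  have h1 := @hq 1 isT.
  by field.
rewrite (@gbin_pascal _ _ hq) subSS.
have [lt|ge] := ltnP N k.+1.
  rewrite (@gbin_gt _ q N k.+1) ?(@gbin_gt _ q N k.+2) //; try lia.
  ring.
have [r Er] : exists r, (N - k = r.+1)%N by exists (N - k).-1; lia.
have E1 : (N - k.+1 = r)%N by lia.
have E2 : (N - k.+2 = r.-1)%N by lia.
have R := @gbin_ratio _ q hq N k.+1; rewrite E1 in R.
have E : gbin q N k.+2 = gbin q N k.+1 * (1 - q ^+ r) / (1 - q ^+ k.+2).
  by rewrite -R mulfK // hq.
rewrite E Er E1 E2 c_rec.
have h1 := @hq k.+2 isT.
by field.
Qed.

Definition aA N j := gbin (q ^+ 2) N j.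
Lemma recA N k : (k <= N.+1)%N -> aA N.+1 k = aA N k.+1 * (fun _ => 0 : K) k.+1
   + aA N k * (q ^+ 2) ^+ k + (if k is k'.+1 then aA N k' * (fun _ => 1 : K) k' else 0).
Proof.
move=> _; case: k => [|k]; rewrite /aA /=.
  by rewrite !(@gbin_n0 _ _ hq2); ring.
by rewrite (@gbin_pascal _ _ hq2); ring.
Qed.

Definition aP N j := (-1) ^+ j * gbin (q ^+ 2) N j * d (N - j).
Lemma recP N k : (k <= N.+1)%N -> aP N.+1 k = aP N k.+1 * uP k.+1
   + aP N k * vP k + (if k is k'.+1 then aP N k' * (fun _ => -1 : K) k' else 0).
Proof.
move=> _; case: k => [|k]; rewrite /aP /uP /vP /=.
  have R := @gbin_ratio _ (q ^+ 2) hq2 N 0; rewrite (@gbin_n0 _ _ hq2) subn0 mul1r in R.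
  have E : gbin (q ^+ 2) N 1 = (1 - (q ^+ 2) ^+ N) / (1 - (q ^+ 2) ^+ 1).
    by rewrite -R mulfK // hq2.
  rewrite subn0 (@gbin_n0 _ _ hq2) E d_rec subn1.
  have h1 := @hq2 1 isT.
  rewrite expr1 in h1 *.
  by rewrite ?(@gbin_n0 _ _ hq2) ?subn0 ?muln0; field.
rewrite (@gbin_pascal _ _ hq2) subSS.
have [lt|ge] := ltnP N k.+1.
  rewrite (@gbin_gt _ (q ^+ 2) N k.+1) ?(@gbin_gt _ (q ^+ 2) N k.+2) //; try lia.
  rewrite !exprS; ring.
have [r Er] : exists r, (N - k = r.+1)%N by exists (N - k).-1; lia.
have E1 : (N - k.+1 = r)%N by lia.
have E2 : (N - k.+2 = r.-1)%N by lia.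
have R := @gbin_ratio _ (q ^+ 2) hq2 N k.+1; rewrite E1 in R.
have E : gbin (q ^+ 2) N k.+2 = gbin (q ^+ 2) N k.+1 * (1 - (q ^+ 2) ^+ r) / (1 - (q ^+ 2) ^+ k.+2).
  by rewrite -R mulfK // hq2.
rewrite E Er E1 E2 d_rec.
have h1 := @hq2 k.+2 isT.
move: h1; rewrite -!exprM.
have -> : (2 * k.+1 = (2 * k).+2)%N by lia.
have -> : (2 * k.+2 = (2 * k).+4)%N by lia.
rewrite !exprS => h1.
by field.
Qed.

Lemma expHR N s : \sum_(m < N.+1) aH N m * s ^+ m = \sum_(m < N.+1) aR N m * Q m s.
Proof.
apply: (@expand_eq K (fun m s => s ^+ m) Q q (-1) (fun _ => 0) (fun m => q ^+ m)
   (fun _ => -1) uQ (fun _ => 0) (fun _ => 1) aH aR).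
- exact: monoH.
- exact: lawQ.
- by move=> N' m H; rewrite /aH gbin_gt // mulr0.
- by move=> N' m H; rewrite /aR gbin_gt // mul0r.
- exact: recH.
- exact: recR.
- by move=> s'; rewrite /aH /aR /c /e /Q /= big_ord0 qpoch0 (@gbin_n0 _ _ hq).
Qed.

Lemma expAP N s : \sum_(m < N.+1) aA N m * s ^+ m = \sum_(m < N.+1) aP N m * P m s.
Proof.
apply: (@expand_eq K (fun m s => s ^+ m) P (q ^+ 2) 1 (fun _ => 0) (fun m => (q ^+ 2) ^+ m)
   (fun _ => 1) uP vP (fun _ => -1) aA aP).
- exact: monoA.
- exact: lawP.
- by move=> N' m H; rewrite /aA gbin_gt.
- by move=> N' m H; rewrite /aP gbin_gt // mulr0 mul0r.
- exact: recA.
- exact: recP.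
  by move=> s'; rewrite /aA /aP /d /P big_ord0 qpoch0 (@gbin_n0 _ _ hq2) !expr0 !mul1r.
Qed.

Lemma fac2 m : qpoch (q ^+ 2) (q ^+ 2) m = qpoch q q m * d m.
Proof.
elim: m => [|m IH]; first by rewrite /d !qpoch0 mulr1.
rewrite /d !qpochS IH /d -exprM mulnC exprM; ring.
Qed.

Lemma facE m : qpoch q q (2 * m) = qpoch (q ^+ 2) (q ^+ 2) m * e m.
Proof.
elim: m => [|m IH]; first by rewrite /e !qpoch0 mulr1.
have -> : (2 * m.+1 = (2 * m).+2)%N by lia.
rewrite /e !qpochS -/(e m) IH -!exprM !exprS; ring.
Qed.

Lemma facO m : qpoch q q (2 * m).+1 = qpoch (q ^+ 2) (q ^+ 2) m * e m.+1.
Proof. by rewrite qpochS facE /e qpochS -exprM; ring. Qed.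

Lemma d_neq0 m : d m != 0.
Proof.
elim: m => [|m IH]; first by rewrite /d qpoch0 oner_neq0.
rewrite /d qpochS mulf_neq0 //.
have := @hq2 m.+1 isT.
have -> : 1 - (q ^+ 2) ^+ m.+1 = (1 - q ^+ m * q) * (1 - q ^+ m * - q).
  rewrite -exprM mulnC exprM exprS expr1 exprS. ring.
by rewrite mulf_eq0 negb_or => /andP[].
Qed.

Lemma e_neq0 m : e m != 0.
Proof.
elim: m => [|m IH]; first by rewrite /e qpoch0 oner_neq0.
rewrite /e qpochS mulf_neq0 // -exprM -exprSr hq //.
Qed.

Lemma T1 n s : fRS n s q =
  \sum_(j < n.+1) (-1) ^+ j * gbin q n j * P j s / qpoch (- q) q j.
Proof.
rewrite /fRS.
have -> : \sum_(j < n.+1) s ^+ j * gbin (q ^+ 2) n j = \sum_(j < n.+1) aA n j * s ^+ j.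
  by apply: eq_bigr => j _; rewrite mulrC.
rewrite expAP mulr_suml; apply: eq_bigr => j _.
have jn : (j <= n)%N by rewrite -ltnS.
rewrite /aP /gbin !ifT // !fac2.
have := @fac_neq0 _ _ hq j; have := @fac_neq0 _ _ hq n; have := @fac_neq0 _ _ hq (n - j).
have := d_neq0 j; have := d_neq0 n; have := d_neq0 (n - j).
rewrite /d => h1 h2 h3 h4 h5 h6.
by field; rewrite ?h1 ?h2 ?h3 ?h4 ?h5 ?h6.
Qed.

Lemma T2 n s : FRS (2 * n) s q =
  \sum_(k < n.+1) gbin (q ^+ 2) n k * Q (2 * k) s / e k.
Proof.
rewrite /FRS.
have -> : ((2 * n).+1)./2 = n by lia.
have -> : \sum_(j < (2 * n).+1) (- s) ^+ j * gbin q (2 * n) j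
   = \sum_(j < (2 * n).+1) aH (2 * n) j * s ^+ j.
  by apply: eq_bigr => j _; rewrite /aH [(- s) ^+ _]exprNn mulrAC.
rewrite expHR (@sum_even_odd K (fun m => aR (2 * n) m * Q m s)).
rewrite [X in _ + X]big1 ?addr0; last first.
  move=> k _; rewrite /aR /c ifT ?mulr0 ?mul0r //.
  have := ltn_ord k; lia.
rewrite mulr_suml; apply: eq_bigr => k _.
have kn : (k <= n)%N by rewrite -ltnS.
rewrite /aR /gbin !ifT //; last by lia.
have -> : (2 * n - 2 * k = 2 * (n - k))%N by lia.
rewrite /c ifF; last by lia.
have -> : (2 * (n - k))./2 = (n - k)%N by lia.
rewrite !facE.
have := @fac_neq0 _ _ hq2 k; have := @fac_neq0 _ _ hq2 n; have := @fac_neq0 _ _ hq2 (n - k).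
have := e_neq0 k; have := e_neq0 n; have := e_neq0 (n - k).
rewrite /e => h1 h2 h3 h4 h5 h6.
by field; rewrite ?h1 ?h2 ?h3 ?h4 ?h5 ?h6.
Qed.

Lemma T3 n s : FRS (2 * n).+1 s q =
  \sum_(k < n.+1) gbin (q ^+ 2) n k * Q (2 * k).+1 s / e k.+1.
Proof.
rewrite /FRS.
have -> : ((2 * n).+2)./2 = n.+1 by lia.
have -> : \sum_(j < (2 * n).+2) (- s) ^+ j * gbin q (2 * n).+1 j
   = \sum_(j < (2 * n).+2) aH (2 * n).+1 j * s ^+ j.
  by apply: eq_bigr => j _; rewrite /aH [(- s) ^+ _]exprNn mulrAC.
rewrite expHR (@sum_even_odd2 K (fun m => aR (2 * n).+1 m * Q m s)).
rewrite big1 ?add0r; last first.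
  move=> k _; rewrite /aR /c ifT ?mulr0 ?mul0r //.
  have := ltn_ord k; lia.
rewrite mulr_suml; apply: eq_bigr => k _.
have kn : (k <= n)%N by rewrite -ltnS.
rewrite /aR /gbin !ifT //; last by lia.
have -> : ((2 * n).+1 - (2 * k).+1 = 2 * (n - k))%N by lia.
rewrite /c ifF; last by lia.
have -> : (2 * (n - k))./2 = (n - k)%N by lia.
rewrite !facO facE.
have := @fac_neq0 _ _ hq2 k; have := @fac_neq0 _ _ hq2 n; have := @fac_neq0 _ _ hq2 (n - k).
have := e_neq0 k.+1; have := e_neq0 n.+1; have := e_neq0 (n - k).
rewrite /e => h1 h2 h3 h4 h5 h6.
by field; rewrite ?h1 ?h2 ?h3 ?h4 ?h5 ?h6.
Qed.

End Main.

Lemma hqv : forall i, (0 < i)%N -> 1 - qv ^+ i != 0.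
Proof.
move=> i Hi.
have -> : 1 - qv ^+ i = tofrac (1 - (('X : {poly rat})%:P : {poly {poly rat}}) ^+ i).
  by rewrite rmorphB rmorph1 rmorphXn.
rewrite -tofrac0 tofrac_eq.
rewrite -(rmorphXn (@polyC _)) -polyC1 -(rmorphB (@polyC _)) polyC_eq0.
apply/negP => /eqP H.
have := congr1 (fun p : {poly rat} => p`_i) H.
rewrite coefB coef1 coefXn eqxx coef0.
by case: i Hi {H} => // i _ /= /eqP; rewrite ?sub0r ?oppr_eq0 ?oner_eq0.
Qed.

Theorem theorem2p1 (n : nat) :
  [/\ fRS n sv qv =
        \sum_(j < n.+1) (-1) ^+ j * gbin qv n j *
           (\prod_(i < j) (qv ^+ (2 * i).+1 - sv)) / qpoch (- qv) qv j,
      FRS (2 * n) sv qv =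
        \sum_(k < n.+1) gbin (qv ^+ 2) n k *
           (\prod_(j < 2 * k) (qv ^+ j - sv)) / qpoch qv (qv ^+ 2) k
    & FRS (2 * n).+1 sv qv =
        \sum_(k < n.+1) gbin (qv ^+ 2) n k *
           (\prod_(j < (2 * k).+1) (qv ^+ j - sv)) / qpoch qv (qv ^+ 2) k.+1].
Proof.
split.
- exact: (@T1 _ qv hqv n sv).
- exact: (@T2 _ qv hqv n sv).
- exact: (@T3 _ qv hqv n sv).
Qed.
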